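(* Consider the real ODE system $$\frac{dp}{dt}=p\,(pR(v_c)-1),\qquad \frac{dv_c}{dt}=-\frac{p}{4}(1+v_c^2),\qquad R(v)=\frac12\left(\frac1v-v\right).$$ Let $0<v_c(0)<1$ and $0<\rho<R(v_c(0))$, and suppose $p(0)>\frac{1}{R(v_c(0))-\rho}$. Then for all $t>0$ in the existence interval, $v_c(t)<v_c(0)$, $p(t)>\frac{1}{R(v_c(t))-\rho}$, and $p(t)\ge\frac{p(0)}{1-\rho p(0)t}$. Consequently $p(t)\to\infty$ at some finite time $t_c\le\frac{1}{\rho p(0)}$, and the quantities $N_2(t)^2=2\pi p(t)^2\left(\frac{1}{v_c(t)}+v_c(t)\right)$ and $N_0(t)=2|p(t)|\max\!\left(\frac{1}{v_c(t)},v_c(t)\right)$ tend to $\infty$ as $t\to t_c^-$.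
   Context: This system is the form, with dissipation coefficient normalized to $\nu=1$, of the pole-dynamics ODEs for the generalized Constantin–Lax–Majda equation with $a=1/2$, $\sigma=0$, written in the variable $p=\omega_{-2,i}/(v_c(1-v_c^2))$. The quantities $N_2$ and $N_0$ equal the $L^2(-\pi,\pi)$ norm and the Wiener norm, respectively, of the associated periodic solution $\omega(\cdot,t)$. *)

(* Defs.v *)
From HB Require Import structures.
From mathcomp Require Import all_boot all_order all_algebra.
From mathcomp Require Import all_classical all_reals all_analysis.
Set Implicit Arguments. Unset Strict Implicit. Unset Printing Implicit Defensive.
Import Order.TTheory GRing.Theory Num.Theory numFieldNormedType.Exports.
Local Open Scope classical_set_scope.
Local Open Scope ring_scope.

Definition Rf {R : realType} (v : R) : R := (v^-1 - v) / 2.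

(* (p, v) solves dp/dt = p (p R(v) - 1), dv/dt = -(p/4)(1+v^2) on [0, T):
   v stays in the domain v <> 0 of R, p and v are right-continuous at 0,
   and differentiable with the prescribed derivatives on (0, T). *)
Definition is_solution {R : realType} (T : \bar R) (p v : R -> R) : Prop :=
  (forall t : R, 0 <= t -> (t%:E < T)%E -> v t != 0) /\
  (p x @[x --> 0^'+] --> p 0) /\ (v x @[x --> 0^'+] --> v 0) /\
  (forall t : R, 0 < t -> (t%:E < T)%E ->
     is_derive t 1 p (p t * (p t * Rf (v t) - 1)) /\
     is_derive t 1 v (- (p t / 4) * (1 + v t ^+ 2))).

Definition is_maximal_solution {R : realType} (T : \bar R) (p v : R -> R) : Prop :=
  (0 < T)%E /\ is_solution T p v /\
  forall (T' : \bar R) (p' v' : R -> R), (T < T')%E -> is_solution T' p' v' ->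
    ~ (forall t : R, 0 <= t -> (t%:E < T)%E -> p' t = p t /\ v' t = v t).

Definition N2sq {R : realType} (p v : R -> R) (t : R) : R :=
  2 * pi * p t ^+ 2 * ((v t)^-1 + v t).

Definition N0 {R : realType} (p v : R -> R) (t : R) : R :=
  2 * `|p t| * Num.max (v t)^-1 (v t).

(* Main.v *)
Require Import Defs.
From HB Require Import structures.
From mathcomp Require Import all_boot all_order all_algebra.
From mathcomp Require Import all_classical all_reals all_analysis.
From mathcomp Require Import ring lra.
Import Order.TTheory GRing.Theory Num.Theory numFieldNormedType.Exports.
Local Open Scope classical_set_scope.
Local Open Scope ring_scope.
Section Aux.
Context {R : realType}.
Implicit Types (f : R -> R).

Lemma der_cont {f} {x df : R} : is_derive x 1 f df -> {for x, continuous f}.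
Proof.
move=> h; apply: differentiable_continuous; apply/derivable1_diffP.
exact: (@ex_derive _ _ _ _ _ _ _ h).
Qed.

Lemma cont_seg {f} {T : \bar R} {a b : R} : 0 <= a -> a < b -> (b%:E < T)%E ->
  (forall s : R, 0 < s -> (s%:E < T)%E -> {for s, continuous f}) ->
  f x @[x --> 0^'+] --> f 0 -> {within `[a, b], continuous f}.
Proof.
move=> a0 ab bT fc f0; apply/continuous_within_itvP => //; split.
- move=> x; rewrite in_itv /= => /andP[ax xb]; apply: fc.
  + exact: le_lt_trans ax.
  + by rewrite (lt_trans _ bT) // lte_fin.
- move: a0; rewrite le_eqVlt => /predU1P[<-//|a0].
  apply: cvg_at_right_filter; apply: fc => //.
  by rewrite (lt_trans _ bT) // lte_fin.
- apply: cvg_at_left_filter; apply: fc => //; exact: le_lt_trans ab.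
Qed.

Lemma mvt0 {f} {df : R -> R} {T : \bar R} {a b : R} : 0 <= a -> a < b -> (b%:E < T)%E ->
  (forall s : R, 0 < s -> (s%:E < T)%E -> is_derive s 1 f (df s)) ->
  f x @[x --> 0^'+] --> f 0 ->
  exists2 c, a < c < b & f b - f a = df c * (b - a).
Proof.
move=> a0 ab bT fd f0.
have fc : {within `[a, b], continuous f}.
  apply: (@cont_seg f T a b a0 ab bT _ f0) => s s0 sT; exact: der_cont (fd s s0 sT).
have fd' : forall x, x \in `]a, b[ -> is_derive x 1 f (df x).
  move=> x; rewrite in_itv /= => /andP[ax xb]; apply: fd.
  + exact: le_lt_trans ax.
  + by rewrite (lt_trans _ bT) // lte_fin.
have [c] := MVT ab fd' fc.
by rewrite in_itv /= => cab E; exists c.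
Qed.

End Aux.
Section Der.
Context {R : realType}.
Implicit Types (f g : R -> R) (x a b c : R).

Lemma dId x : is_derive x 1 (fun y : R => y) 1.
Proof. have h := @is_derive_id _ R x 1. eapply is_derive_eq; first exact h. by []. Qed.

Lemma dCst c x : is_derive x 1 (fun _ : R => c) 0.
Proof. have h := @is_derive_cst _ R R c x 1. eapply is_derive_eq; first exact h. by []. Qed.

Lemma dAdd {f g x a b} : is_derive x 1 f a -> is_derive x 1 g b ->
  is_derive x 1 (fun y => f y + g y) (a + b).
Proof. move=> hf hg; have h := is_deriveD hf hg. eapply is_derive_eq; first exact h. by []. Qed.

Lemma dOpp {f x a} : is_derive x 1 f a -> is_derive x 1 (fun y => - f y) (- a).
Proof. move=> hf; have h := is_deriveN hf. eapply is_derive_eq; first exact h. by []. Qed.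

Lemma dSub {f g x a b} : is_derive x 1 f a -> is_derive x 1 g b ->
  is_derive x 1 (fun y => f y - g y) (a - b).
Proof. move=> hf hg; exact (dAdd hf (dOpp hg)). Qed.

Lemma dMul {f g x a b} : is_derive x 1 f a -> is_derive x 1 g b ->
  is_derive x 1 (fun y => f y * g y) (f x * b + g x * a).
Proof. move=> hf hg; have h := is_deriveM hf hg. eapply is_derive_eq; first exact h. by []. Qed.

Lemma dInv {f x a} : is_derive x 1 f a -> f x != 0 ->
  is_derive x 1 (fun y => (f y)^-1) (- a / (f x) ^+ 2).
Proof.
move=> hf f0; have h := is_deriveV f0 hf. eapply is_derive_eq; first exact h.
rewrite /= -[_ *: _]/(_ * _); field; rewrite ?expf_neq0 //.
Qed.

Lemma dComp {f g x a b} : is_derive x 1 g b -> is_derive (g x) 1 f a ->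
  is_derive x 1 (fun y => f (g y)) (a * b).
Proof. move=> hg hf; have h := is_derive1_comp hf hg. eapply is_derive_eq; first exact h. by []. Qed.

Lemma dExp x : is_derive x 1 (fun y : R => expR y) (expR x).
Proof. have h := is_derive_expR x. eapply is_derive_eq; first exact h. by []. Qed.

Lemma dAtan x : is_derive x 1 (fun y : R => atan y) (1 + x ^+ 2)^-1.
Proof. have h := is_derive1_atan x. eapply is_derive_eq; first exact h. by []. Qed.

Lemma dEq {f x a b} : is_derive x 1 f a -> a = b -> is_derive x 1 f b.
Proof. by move=> h <-. Qed.

Lemma dExt {f g x a} : (forall y, f y = g y) -> is_derive x 1 f a -> is_derive x 1 g a.
Proof. by move=> /funext ->. Qed.

End Der.
Section Prob.
Context {R : realType}.
Definition mm (x : R) : R := x ^+ 2 / (1 + x ^+ 2) ^+ 2.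
Definition kk (x : R) : R := 2 * atan x - 2 * x * (1 - x ^+ 2) / (1 + x ^+ 2) ^+ 2.

Lemma sq1_gt0 (x : R) : 0 < 1 + x ^+ 2.
Proof. by rewrite ltr_pwDl // sqr_ge0. Qed.

Lemma sq1_neq0 (x : R) : 1 + x ^+ 2 != 0.
Proof. by rewrite gt_eqF // sq1_gt0. Qed.

Lemma dSq {f : R -> R} {x a : R} : is_derive x 1 f a -> is_derive x 1 (fun y => f y ^+ 2) (2 * f x * a).
Proof.
move=> h; apply: (dExt _ (dEq (dMul h h) _)) => [y|]; first by rewrite expr2.
ring.
Qed.

Lemma d1sq (x : R) : is_derive x 1 (fun y : R => 1 + y ^+ 2) (2 * x).
Proof. apply: (dEq (dAdd (dCst 1 x) (dSq (dId x)))); ring. Qed.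

Lemma dmm (x : R) : is_derive x 1 mm (2 * x * (1 - x ^+ 2) / (1 + x ^+ 2) ^+ 3).
Proof.
have h := dMul (dSq (dId x)) (dInv (dSq (d1sq x)) (expf_neq0 2 (sq1_neq0 x))).
apply: (dExt _ (dEq h _)) => [y|]; first by rewrite /mm.
have := sq1_neq0 x; move=> hx.
field; exact: hx.
Qed.

Lemma dkk (x : R) : is_derive x 1 kk (16 * x ^+ 2 / (1 + x ^+ 2) ^+ 3).
Proof.
have h := dSub (dMul (dCst 2 x) (dAtan x))
  (dMul (dMul (dMul (dCst 2 x) (dId x)) (dSub (dCst 1 x) (dSq (dId x))))
     (dInv (dSq (d1sq x)) (expf_neq0 2 (sq1_neq0 x)))).
apply: (dExt _ (dEq h _)) => [y|]; first by rewrite /kk.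
have := sq1_neq0 x; move=> hx.
field; exact: hx.
Qed.

Lemma dRf {x : R} : x != 0 -> is_derive x 1 Rf (- (1 + x ^+ 2) / (2 * x ^+ 2)).
Proof.
move=> x0.
have h := dMul (dSub (dInv (dId x) x0) (dId x)) (dCst 2^-1 x).
apply: (dExt _ (dEq h _)) => [y|]; first by rewrite /Rf.
field; exact: x0.
Qed.

End Prob.
Section Cvg.
Context {R : realType}.
Context {F : set_system R} {FF : Filter F}.
Implicit Types (f g : R -> R) (a b : R).

Lemma cAdd {f g a b} : f x @[x --> F] --> a -> g x @[x --> F] --> b ->
  (f x + g x) @[x --> F] --> a + b.
Proof. move=> hf hg; exact: cvgD hf hg. Qed.

Lemma cOpp {f a} : f x @[x --> F] --> a -> (- f x) @[x --> F] --> - a.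
Proof. move=> hf; exact: cvgN hf. Qed.

Lemma cSub {f g a b} : f x @[x --> F] --> a -> g x @[x --> F] --> b ->
  (f x - g x) @[x --> F] --> a - b.
Proof. move=> hf hg; exact: cAdd hf (cOpp hg). Qed.

Lemma cMul {f g a b} : f x @[x --> F] --> a -> g x @[x --> F] --> b ->
  (f x * g x) @[x --> F] --> a * b.
Proof. move=> hf hg; exact: cvgM hf hg. Qed.

Lemma cInv {f a} : f x @[x --> F] --> a -> a != 0 -> (f x)^-1 @[x --> F] --> a^-1.
Proof. move=> hf a0; exact: cvgV a0 hf. Qed.

Lemma cCst (c : R) : (fun _ : R => c) x @[x --> F] --> c.
Proof. exact: cvg_cst. Qed.

Lemma cComp {f} {h : R -> R} {a} : f x @[x --> F] --> a -> {for a, continuous h} ->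
  h (f x) @[x --> F] --> h a.
Proof. move=> hf hc; exact: continuous_cvg hc hf. Qed.

End Cvg.

Lemma cIdr {R : realType} (a : R) : x @[x --> a^'+] --> a.
Proof. exact: cvg_at_right_filter cvg_id. Qed.
Section KK.
Context {R : realType}.

Lemma kk0 : kk (0:R) = 0.
Proof. by rewrite /kk atan0 !(mulr0, mul0r) subrr. Qed.

Lemma kk_cont (x : R) : {for x, continuous kk}.
Proof. exact: der_cont (dkk x). Qed.

Lemma kk_lt {a b : R} : 0 <= a -> a < b -> kk a < kk b.
Proof.
move=> a0 ab.
have hc : {within `[a, b], continuous kk}.
  by apply: continuous_subspaceT => x; exact: kk_cont.
have hd : forall x, x \in `]a, b[ -> is_derive x 1 kk (16 * x ^+ 2 / (1 + x ^+ 2) ^+ 3).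
  by move=> x _; exact: dkk.
have [c] := MVT ab hd hc; rewrite in_itv /= => /andP[ac cb] E.
have c0 : 0 < c by exact: le_lt_trans ac.
rewrite -subr_gt0 E mulr_gt0 // ?subr_gt0 // divr_gt0 ?exprn_gt0 ?sq1_gt0 //.
by rewrite mulr_gt0 // exprn_gt0.
Qed.

Lemma kk_le {a b : R} : 0 <= a -> a <= b -> kk a <= kk b.
Proof.
move=> a0; rewrite le_eqVlt => /predU1P[->//|ab].
by apply: ltW; exact: kk_lt a0 ab.
Qed.

Lemma kk_inj (a b : R) : 0 <= a -> 0 <= b -> kk a = kk b -> a = b.
Proof.
move=> a0 b0 e; case: (ltgtP a b) => // h.
- by have := kk_lt a0 h; rewrite e ltxx.
- by have := kk_lt b0 h; rewrite e ltxx.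
Qed.

Definition kinv (y : R) : R := xget 0 [set x | 0 < x /\ kk x = y].

Lemma kinv_spec {y : R} : (exists x, 0 < x /\ kk x = y) -> 0 < kinv y /\ kk (kinv y) = y.
Proof. by move=> e; have := xgetPex 0 e. Qed.

Lemma kinvK (x : R) : 0 < x -> kinv (kk x) = x.
Proof.
move=> x0; have [h1 h2] := kinv_spec (ex_intro _ x (conj x0 erefl)).
by apply: kk_inj; rewrite ?ltW.
Qed.

Lemma dkinv {x : R} : 0 < x -> is_derive (kk x) 1 kinv ((16 * x ^+ 2 / (1 + x ^+ 2) ^+ 3)^-1).
Proof.
move=> x0.
have hn : {near x, cancel kk kinv}.
  near=> z; apply: kinvK; near: z; exact: lt_nbhsr x0.
have hc : {near x, continuous kk}.
  by near=> z; exact: kk_cont.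
apply: (is_derive_inverse hn hc (dkk x)).
by rewrite gt_eqF // divr_gt0 ?exprn_gt0 ?sq1_gt0 // mulr_gt0 // exprn_gt0.
Unshelve. all: by end_near. Qed.

End KK.
Section Gen.
Context {R : realType}.

Lemma mm_le_id (x : R) : 0 < x -> x < 1 -> mm x <= x.
Proof.
move=> x0 x1; rewrite /mm ler_pdivrMr ?exprn_gt0 ?sq1_gt0 //.
have h1 : 1 <= (1 + x ^+ 2) ^+ 2.
  have : 1 <= 1 + x ^+ 2 by rewrite lerDl sqr_ge0.
  move=> h; rewrite expr2; nra.
have h2 : x ^+ 2 <= x by rewrite expr2; nra.
nra.
Qed.

Lemma expdiff (s t : R) : 0 <= s -> s <= t -> expR (- s) - expR (- t) <= t - s.
Proof.
move=> s0 st.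
have h := expR_ge1Dx (- (t - s)).
have e : expR (- t) = expR (- s) * expR (- (t - s)) by rewrite -expRD; congr expR; ring.
have e1 : expR (- s) <= 1 by rewrite expR_le1 oppr_le0.
have e2 : expR (- (t - s)) <= 1 by rewrite expR_le1 oppr_le0 subr_ge0.
have e0 := expR_gt0 (- s).
rewrite e; set E := expR (- s) in e0 e1 *; set F := expR _ in h e2 *.
nra.
Qed.

End Gen.
Lemma mm_gt0 {R : realType} (x : R) : x != 0 -> 0 < mm x.
Proof.
move=> x0; rewrite /mm divr_gt0 //; last by rewrite exprn_gt0 // sq1_gt0.
by rewrite lt_neqAle sqr_ge0 andbT eq_sym sqrf_eq0.
Qed.

Section Main.
Context {R : realType} (T : \bar R) (p v : R -> R) (rho : R).
Context (hsol : is_solution T p v) (hv0 : 0 < v 0) (hv1 : v 0 < 1)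
  (hr0 : 0 < rho) (hr1 : rho < Rf (v 0)) (hp0 : (Rf (v 0) - rho)^-1 < p 0)
  (hT : (0 < T)%E).

Lemma vnz {t} : 0 <= t -> (t%:E < T)%E -> v t != 0.
Proof. by case: hsol => h _; apply: h. Qed.
Lemma cp : p x @[x --> 0^'+] --> p 0.
Proof. by case: hsol => _ []. Qed.
Lemma cv : v x @[x --> 0^'+] --> v 0.
Proof. by case: hsol => _ [] _ []. Qed.
Lemma dp {t} : 0 < t -> (t%:E < T)%E -> is_derive t 1 p (p t * (p t * Rf (v t) - 1)).
Proof. by case: hsol => _ [] _ [] _ h t0 tT; case: (h t t0 tT). Qed.
Lemma dv {t} : 0 < t -> (t%:E < T)%E -> is_derive t 1 v (- (p t / 4) * (1 + v t ^+ 2)).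
Proof. by case: hsol => _ [] _ [] _ h t0 tT; case: (h t t0 tT). Qed.

Lemma p0_pos : 0 < p 0.
Proof. apply: lt_trans hp0; by rewrite invr_gt0 subr_gt0. Qed.

Definition A := p 0 * mm (v 0).

Lemma A_gt0 : 0 < A.
Proof. by rewrite /A mulr_gt0 ?p0_pos // mm_gt0 // gt_eqF. Qed.

Lemma Q1 {s} : 0 < s -> (s%:E < T)%E -> p s * mm (v s) * expR s = A.
Proof.
move=> s0 sT.
have hd : forall u, 0 < u -> (u%:E < T)%E ->
    is_derive u 1 (fun s => p s * mm (v s) * expR s) 0.
  move=> u u0 uT; have vu := vnz (ltW u0) uT.
  apply: (dEq (dMul (dMul (dp u0 uT) (dComp (dv u0 uT) (dmm (v u)))) (dExp u))).
  by rewrite /mm /Rf; field; rewrite vu sq1_neq0.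
have hc : p x * mm (v x) * expR x @[x --> 0^'+] --> p 0 * mm (v 0) * expR 0.
  exact (cMul (cMul cp (cComp cv (der_cont (dmm (v 0))))) (cComp (cIdr 0) (der_cont (dExp 0)))).
have [c _] := mvt0 (lexx 0) s0 sT hd hc.
by rewrite mul0r expR0 mulr1 => /eqP; rewrite subr_eq0 => /eqP.
Qed.

Lemma p_pos {s} : 0 <= s -> (s%:E < T)%E -> 0 < p s.
Proof.
rewrite le_eqVlt => /predU1P[<- _|s0 sT]; first exact: p0_pos.
have := A_gt0; rewrite -(Q1 s0 sT) -mulrA pmulr_lgt0 //.
by rewrite mulr_gt0 ?expR_gt0 // mm_gt0 // vnz // ltW.
Qed.

Lemma v_lt {s} : 0 < s -> (s%:E < T)%E -> v s < v 0.
Proof.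
move=> s0 sT.
have hd : forall u, 0 < u -> (u%:E < T)%E ->
    is_derive u 1 v (- (p u / 4) * (1 + v u ^+ 2)) by move=> u u0 uT; exact: dv.
have [c /andP[c0 cs]] := mvt0 (lexx 0) s0 sT hd cv.
move=> /eqP; rewrite subr_eq => /eqP ->; rewrite gtrDr subr0.
rewrite !mulNr oppr_lt0 mulr_gt0 // mulr_gt0 ?sq1_gt0 // divr_gt0 // p_pos // ?ltW //.
by rewrite (lt_trans _ sT) // lte_fin.
Qed.


Lemma v_pos {s} : 0 <= s -> (s%:E < T)%E -> 0 < v s.
Proof.
rewrite le_eqVlt => /predU1P[<- _|s0 sT]; first exact: hv0.
rewrite ltNge; apply/negP => vs.
have hc : {within `[0, s], continuous v}.
  apply: (cont_seg (lexx 0) s0 sT _ cv) => u u0 uT; exact: der_cont (dv u0 uT).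
have [|c] := IVT (ltW s0) hc (v := 0).
  by rewrite ge_min le_max vs (ltW hv0) orbT.
rewrite in_itv /= => /andP[c0 cs] vc.
have cT : (c%:E < T)%E by rewrite (le_lt_trans _ sT) // lee_fin.
by move: (vnz c0 cT); rewrite vc eqxx.
Qed.


Lemma sT_lt {s u} : u <= s -> (s%:E < T)%E -> (u%:E < T)%E.
Proof. by move=> us sT; rewrite (le_lt_trans _ sT) // lee_fin. Qed.

Lemma D_pos {s} : 0 < s -> (s%:E < T)%E -> (p s)^-1 < Rf (v s) - rho.
Proof.
move=> s0 sT.
pose f := fun u => (Rf (v u) - rho - (p u)^-1) * expR (- u).
have hd : forall u, 0 < u -> (u%:E < T)%E ->
    is_derive u 1 f (expR (- u) * (p u * (1 + v u ^+ 2) ^+ 2 / (8 * v u ^+ 2) + rho)).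
  move=> u u0 uT; have vu := vnz (ltW u0) uT; rewrite /f.
  have pu : p u != 0 by rewrite gt_eqF // p_pos // ltW.
  apply: (dEq (dMul (dSub (dSub (dComp (dv u0 uT) (dRf vu)) (dCst rho u))
     (dInv (dp u0 uT) pu)) (dComp (dOpp (dId u)) (dExp (- u))))).
  by rewrite /Rf; field; rewrite vu pu.
have hc : f x @[x --> 0^'+] --> f 0.
  rewrite /f.
  have v0 : v 0 != 0 by rewrite gt_eqF.
  have p0 : p 0 != 0 by rewrite gt_eqF // p0_pos.
  exact (cMul (cSub (cSub (cComp cv (der_cont (dRf v0))) (cCst rho)) (cInv cp p0))
     (cComp (cOpp (cIdr 0)) (der_cont (dExp (- 0))))).
have [c /andP[c0 cs]] := mvt0 (lexx 0) s0 sT hd hc.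
move=> /eqP; rewrite subr_eq => /eqP E.
have cT := sT_lt (ltW cs) sT.
have pc := p_pos (ltW c0) cT.
have vc := vnz (ltW c0) cT.
have f0 : 0 < f 0.
  have h : (p 0)^-1 < Rf (v 0) - rho.
    rewrite -[X in _ < X]invrK ltf_pV2 ?posrE ?p0_pos ?invr_gt0 ?subr_gt0 //.
  rewrite /f oppr0 expR0 mulr1; lra.
have : 0 < f s.
  rewrite E (lt_le_trans f0) // lerDr subr0 mulr_ge0 ?(ltW s0) // mulr_ge0 ?expR_ge0 //.
  have s1 := ltW (sq1_gt0 (v c)).
  rewrite addr_ge0 ?(ltW hr0) //; apply: divr_ge0.
    exact: mulr_ge0 (ltW pc) (exprn_ge0 2 s1).
  by apply: mulr_ge0 => //; exact: sqr_ge0.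
by rewrite /f /= pmulr_lgt0 ?expR_gt0 // subr_gt0.
Qed.

Lemma inv_bound {s} : 0 < s -> (s%:E < T)%E -> (p s)^-1 + rho * s < (p 0)^-1.
Proof.
move=> s0 sT.
pose f := fun u => (p u)^-1 + rho * u.
have hd : forall u, 0 < u -> (u%:E < T)%E ->
    is_derive u 1 f (- (Rf (v u) - rho - (p u)^-1)).
  move=> u u0 uT; rewrite /f.
  have pu : p u != 0 by rewrite gt_eqF // p_pos // ltW.
  apply: (dEq (dAdd (dInv (dp u0 uT) pu) (dMul (dCst rho u) (dId u)))).
  by field; rewrite pu.
have hc : f x @[x --> 0^'+] --> f 0.
  rewrite /f.
  have p0 : p 0 != 0 by rewrite gt_eqF // p0_pos.
  exact (cAdd (cInv cp p0) (cMul (cCst rho) (cIdr 0))).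
have [c /andP[c0 cs]] := mvt0 (lexx 0) s0 sT hd hc.
move=> /eqP; rewrite subr_eq => /eqP E.
have cT := sT_lt (ltW cs) sT.
have := D_pos c0 cT; rewrite -subr_gt0 => Dc.
have -> : (p s)^-1 + rho * s = f s by [].
rewrite E /f mulr0 addr0 gtrDr subr0 mulNr oppr_lt0 mulr_gt0 //.
Qed.


Lemma part1 {s} : 0 < s -> (s%:E < T)%E ->
  [/\ v s < v 0, (Rf (v s) - rho)^-1 < p s & p 0 / (1 - rho * p 0 * s) <= p s].
Proof.
move=> s0 sT.
have ps := p_pos (ltW s0) sT.
have ips : 0 < (p s)^-1 by rewrite invr_gt0.
have D := D_pos s0 sT.
have ib := inv_bound s0 sT.
split; first exact: v_lt s0 sT.
  rewrite -[p s]invrK ltf_pV2 ?posrE ?invr_gt0 //.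
  exact: lt_trans D.
have w0 : 0 < (p 0)^-1 - rho * s by lra.
have p0n : p 0 != 0 by rewrite gt_eqF // p0_pos.
have e1 : 1 - rho * p 0 * s = p 0 * ((p 0)^-1 - rho * s) by field.
have e : p 0 / (1 - rho * p 0 * s) = ((p 0)^-1 - rho * s)^-1.
  have e2 : 1 + - (rho * s) * p 0 = p 0 * ((p 0)^-1 - rho * s) by field.
  by rewrite e1; field; rewrite p0n /= e2 mulf_neq0 // gt_eqF.
rewrite e -[p s]invrK lef_pV2 ?posrE ?invr_gt0 //.
lra.
Qed.


Lemma key {s} : 0 < s -> (s%:E < T)%E -> s < (rho * p 0)^-1.
Proof.
move=> s0 sT.
have ib := inv_bound s0 sT.
have ips : 0 < (p s)^-1 by rewrite invr_gt0 p_pos // ltW.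
have h : rho * s < (p 0)^-1 by lra.
have r0 : rho != 0 by rewrite gt_eqF.
by rewrite invfM -[s](mulKf r0) ltr_pM2l ?invr_gt0.
Qed.

Lemma bnd_gt0 : 0 < (rho * p 0)^-1.
Proof. by rewrite invr_gt0 mulr_gt0 // p0_pos. Qed.

Lemma T_fin : exists tc, [/\ T = tc%:E, 0 < tc & tc <= (rho * p 0)^-1].
Proof.
case E : T hT => [tc| |] //= hT'.
- exists tc; split => //.
  rewrite leNgt; apply/negP => h.
  have hk := @key _ bnd_gt0; rewrite E lte_fin in hk.
  by move: (hk h); rewrite ltxx.
- have hk := @key _ bnd_gt0; rewrite E in hk.
  by move: (hk (ltry _)); rewrite ltxx.
Qed.


Lemma Q1' {s} : 0 <= s -> (s%:E < T)%E -> p s * mm (v s) * expR s = A.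
Proof.
rewrite le_eqVlt => /predU1P[<- _|s0 sT]; last exact: Q1 s0 sT.
by rewrite expR0 mulr1.
Qed.

Lemma Q2 {s} : 0 < s -> (s%:E < T)%E -> kk (v s) - 4 * p s * mm (v s) = kk (v 0) - 4 * A.
Proof.
move=> s0 sT.
have hd : forall u, 0 < u -> (u%:E < T)%E ->
    is_derive u 1 (fun s => kk (v s) - 4 * p s * mm (v s)) 0.
  move=> u u0 uT; have vu := vnz (ltW u0) uT.
  apply: (dEq (dSub (dComp (dv u0 uT) (dkk (v u)))
     (dMul (dMul (dCst 4 u) (dp u0 uT)) (dComp (dv u0 uT) (dmm (v u)))))).
  by rewrite /mm /Rf; field; rewrite vu sq1_neq0.
have hc : kk (v x) - 4 * p x * mm (v x) @[x --> 0^'+] --> kk (v 0) - 4 * p 0 * mm (v 0).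
  exact (cSub (cComp cv (kk_cont _)) (cMul (cMul (cCst 4) cp) (cComp cv (der_cont (dmm (v 0)))))).
have [c _] := mvt0 (lexx 0) s0 sT hd hc.
rewrite mul0r => /eqP; rewrite subr_eq0 => /eqP ->.
by rewrite /A mulrA.
Qed.

Definition yy (t : R) : R := 4 * A * expR (- t) + kk (v 0) - 4 * A.
Definition VV (t : R) : R := kinv (yy t).
Definition PP (t : R) : R := A * expR (- t) / mm (VV t).

Lemma yy_v {s} : 0 <= s -> (s%:E < T)%E -> kk (v s) = yy s.
Proof.
rewrite le_eqVlt => /predU1P[<- _|s0 sT].
  by rewrite /yy oppr0 expR0 mulr1; ring.
have q1 := Q1 s0 sT.
have q2 := Q2 s0 sT.
have e : p s * mm (v s) = A * expR (- s).
  by rewrite -q1 expRN; field; rewrite gt_eqF // expR_gt0.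
rewrite -mulrA e in q2.
rewrite /yy; lra.
Qed.

Lemma VV_v {s} : 0 <= s -> (s%:E < T)%E -> VV s = v s.
Proof. by move=> s0 sT; rewrite /VV -(yy_v s0 sT) kinvK // v_pos. Qed.

Lemma PP_p {s} : 0 <= s -> (s%:E < T)%E -> PP s = p s.
Proof.
move=> s0 sT; rewrite /PP (VV_v s0 sT) -(Q1' s0 sT) expRN.
have vs := vnz s0 sT.
by field; apply/andP; split; apply: lt0r_neq0; [exact: mm_gt0|exact: expR_gt0].
Qed.


Lemma dyy (t : R) : is_derive t 1 yy (- (4 * A * expR (- t))).
Proof.
apply: (dEq (dSub (dAdd (dMul (dCst (4 * A) t) (dComp (dOpp (dId t)) (dExp (- t))))
  (dCst (kk (v 0)) t)) (dCst (4 * A) t))).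
ring.
Qed.

Lemma dVV {t} : 0 < VV t -> kk (VV t) = yy t ->
  is_derive t 1 VV (- (PP t / 4) * (1 + VV t ^+ 2)).
Proof.
move=> x0 kx; have h := dkinv x0; rewrite kx in h.
apply: (dEq (dComp (dyy t) h)).
have xn : VV t != 0 by rewrite gt_eqF.
rewrite /PP /mm; field; by rewrite xn sq1_neq0.
Qed.

Lemma dPP {t} : 0 < VV t -> kk (VV t) = yy t ->
  is_derive t 1 PP (PP t * (PP t * Rf (VV t) - 1)).
Proof.
move=> x0 kx.
have xn : VV t != 0 by rewrite gt_eqF.
have mn : mm (VV t) != 0 by rewrite gt_eqF // mm_gt0.
apply: (dEq (dMul (dMul (dCst A t) (dComp (dOpp (dId t)) (dExp (- t))))
  (dInv (dComp (dVV x0 kx) (dmm (VV t))) mn))).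
rewrite /PP /mm /Rf; field; by rewrite xn sq1_neq0.
Qed.

Section Ext.
Context (tc : R) (hTc : T = tc%:E) (htc : 0 < tc) (M : R)
  (hM : forall s, 0 < s -> s < tc -> p s <= M).

Lemma sT' {s} : s < tc -> (s%:E < T)%E.
Proof. by rewrite hTc lte_fin. Qed.

Lemma M_gt0 : 0 < M.
Proof.
have h0 : 0 < tc / 2 by rewrite divr_gt0.
have h1 : tc / 2 < tc by rewrite ltr_pdivrMr // ltr_pMr // ltr1n.
apply: (lt_le_trans _ (hM _ h0 h1)).
exact: p_pos (ltW h0) (sT' h1).
Qed.

Definition dl := A * expR (- tc) / M.

Lemma dl_gt0 : 0 < dl.
Proof. by rewrite /dl divr_gt0 ?M_gt0 // mulr_gt0 ?A_gt0 ?expR_gt0. Qed.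

Lemma vdl {s} : 0 < s -> s < tc -> dl <= v s.
Proof.
move=> s0 stc; have sT := sT' stc.
have ps := p_pos (ltW s0) sT.
have vs0 := v_pos (ltW s0) sT.
have vs1 : v s < 1 by exact: lt_trans (v_lt s0 sT) hv1.
apply: (@le_trans _ _ (mm (v s))); last exact: mm_le_id vs0 vs1.
have e : mm (v s) = A * expR (- s) / p s.
  rewrite -(Q1 s0 sT) expRN; field.
  by apply/andP; split; apply: lt0r_neq0 => //; exact: expR_gt0.
rewrite e /dl; apply: ler_pM.
- by rewrite mulr_ge0 // ?expR_ge0 // ltW // A_gt0.
- by rewrite invr_ge0 ltW // M_gt0.
- by rewrite ler_pM2l ?A_gt0 // ler_expR lerN2 ltW.
- by rewrite lef_pV2 ?posrE ?M_gt0 //; exact: hM.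
Qed.

Lemma yy_dl {s} : 0 < s -> s < tc -> kk dl <= yy s.
Proof.
move=> s0 stc; rewrite -(yy_v (ltW s0) (sT' stc)).
by apply: kk_le; [exact: ltW dl_gt0 | exact: vdl].
Qed.

Definition aa := dl / 2.
Definition gg := kk dl - kk aa.
Definition eps := Num.min tc (gg / (4 * A)).
Definition s1 := tc - eps / 4.
Definition T' := tc + eps / 4.

Lemma aa_gt0 : 0 < aa.
Proof. by rewrite /aa divr_gt0 // dl_gt0. Qed.

Lemma aa_lt : aa < dl.
Proof. have := dl_gt0; rewrite /aa; lra. Qed.

Lemma gg_gt0 : 0 < gg.
Proof. by rewrite /gg subr_gt0; apply: kk_lt; [exact: ltW aa_gt0 | exact: aa_lt]. Qed.

Lemma eps_gt0 : 0 < eps.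
Proof. by rewrite /eps lt_min htc divr_gt0 ?gg_gt0 // mulr_gt0 // A_gt0. Qed.

Lemma eps_le : eps <= tc.
Proof. by rewrite /eps ge_min lexx. Qed.

Lemma eps_le2 : 4 * A * eps <= gg.
Proof.
have h : eps <= gg / (4 * A) by rewrite /eps ge_min lexx orbT.
have hA : 0 < 4 * A by rewrite mulr_gt0 // A_gt0.
by move: h; rewrite ler_pdivlMr // mulrC.
Qed.

Lemma s1_pos : 0 < s1.
Proof. have := eps_le; have := eps_gt0; rewrite /s1; lra. Qed.

Lemma s1_lt : s1 < tc.
Proof. have := eps_gt0; rewrite /s1; lra. Qed.

Lemma T'_gt : tc < T'.
Proof. have := eps_gt0; rewrite /T'; lra. Qed.

Lemma yyT' : kk aa < yy T'.
Proof.
have h1 := yy_dl s1_pos s1_lt.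
have h2 := @expdiff _ s1 T' (ltW s1_pos) (ltW (lt_trans s1_lt T'_gt)).
have e : yy T' = yy s1 - 4 * A * (expR (- s1) - expR (- T')) by rewrite /yy; ring.
have e2 : T' - s1 = eps / 2 by rewrite /T' /s1; field.
have hA : 0 < 4 * A by rewrite mulr_gt0 // A_gt0.
have h4 : 4 * A * (expR (- s1) - expR (- T')) <= 4 * A * (eps / 2).
  by rewrite ler_pM2l // -e2.
have h5 := eps_le2.
have h6 : 4 * A * (eps / 2) = (4 * A * eps) / 2 by ring.
have hg : gg = kk dl - kk aa by [].
have g0 := gg_gt0.
rewrite e; rewrite h6 in h4; move: h4 h5 h1 hg g0.
generalize (4 * A * eps) => Y; generalize (4 * A * (expR (- s1) - expR (- T'))) => X.
move=> *; lra.
Qed.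

Lemma yy_le {s t} : s <= t -> yy t <= yy s.
Proof.
move=> st; have h : expR (- t) <= expR (- s) by rewrite ler_expR lerN2.
have hA := A_gt0; rewrite /yy; nra.
Qed.

Lemma range {t} : 0 <= t -> t <= T' -> exists x, 0 < x /\ kk x = yy t.
Proof.
move=> t0 tT.
have av : aa <= v 0.
  apply: ltW; apply: (lt_le_trans aa_lt); apply: (le_trans (vdl s1_pos s1_lt)).
  exact: ltW (v_lt s1_pos (sT' s1_lt)).
have hc : {within `[aa, v 0], continuous kk}.
  by apply: continuous_subspaceT => x; exact: kk_cont.
have y1 : kk aa <= yy t by apply: ltW; apply: (lt_le_trans yyT'); exact: yy_le.
have y2 : yy t <= kk (v 0).
  have := yy_le t0; suff -> : yy 0 = kk (v 0) by [].
  by rewrite /yy oppr0 expR0 mulr1; ring.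
have [|c] := IVT av hc (v := yy t).
  by rewrite ge_min le_max; apply/andP; split; apply/orP; [left|right].
rewrite in_itv /= => /andP[ac _] e; exists c; split => //.
exact: lt_le_trans aa_gt0 ac.
Qed.

Lemma ext_sol : is_solution T'%:E PP VV.
Proof.
split.
  move=> t t0; rewrite lte_fin => tT.
  have [h _] := kinv_spec (range t0 (ltW tT)).
  exact: lt0r_neq0 h.
split.
  rewrite (PP_p (lexx 0) (sT' htc)); apply: (cvg_trans _ cp).
  apply: near_eq_cvg.
  apply: (@filterS2 _ _ _ _ _ _ _ (nbhs_right_ge 0) (nbhs_right_lt htc)) => x h0 h1.
  by rewrite PP_p // sT'.
split.
  rewrite (VV_v (lexx 0) (sT' htc)); apply: (cvg_trans _ cv).
  apply: near_eq_cvg.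
  apply: (@filterS2 _ _ _ _ _ _ _ (nbhs_right_ge 0) (nbhs_right_lt htc)) => x h0 h1.
  by rewrite VV_v // sT'.
move=> t t0; rewrite lte_fin => tT.
have [h1 h2] := kinv_spec (range (ltW t0) (ltW tT)).
split; [exact: dPP h1 h2 | exact: dVV h1 h2].
Qed.

Lemma no_max : is_maximal_solution T p v -> False.
Proof.
case=> _ [_ hm].
apply: (hm (T'%:E) PP VV _ ext_sol); first by rewrite hTc lte_fin T'_gt.
by move=> t t0 tT; split; [exact: PP_p | exact: VV_v].
Qed.

End Ext.

Lemma unbounded (hmax : is_maximal_solution T p v) (M : R) :
  exists s, [/\ 0 < s, (s%:E < T)%E & M < p s].
Proof.
apply: contrapT => hn.
have [tc [hTc htc _]] := T_fin.
have hM : forall s, 0 < s -> s < tc -> p s <= M.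
  move=> s s0 stc; rewrite leNgt; apply/negP => h; apply: hn; exists s; split => //.
  by rewrite hTc lte_fin.
exact: (@no_max tc hTc htc M hM hmax).
Qed.

Lemma p_incr {s t} : 0 < s -> s < t -> (t%:E < T)%E -> p s < p t.
Proof.
move=> s0 st tT.
have hd : forall u, 0 < u -> (u%:E < T)%E ->
    is_derive u 1 p (p u * (p u * Rf (v u) - 1)) by move=> u u0 uT; exact: dp.
have [c /andP[sc ct]] := mvt0 (ltW s0) st tT hd cp.
move=> /eqP; rewrite subr_eq => /eqP ->.
have c0 : 0 < c by exact: lt_trans sc.
have cT := sT_lt (ltW ct) tT.
have pc := p_pos (ltW c0) cT.
have D := D_pos c0 cT.
have e : p c * Rf (v c) - 1 = p c * (Rf (v c) - rho - (p c)^-1) + p c * rho.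
  by field; exact: lt0r_neq0.
rewrite ltrDr mulr_gt0 ?subr_gt0 // mulr_gt0 // e addr_gt0 // mulr_gt0 //.
by rewrite subr_gt0.
Qed.

Lemma final (hmax : is_maximal_solution T p v) :
  (forall t : R, 0 < t -> (t%:E < T)%E ->
     [/\ v t < v 0, (Rf (v t) - rho)^-1 < p t &
         p 0 / (1 - rho * p 0 * t) <= p t]) /\
  exists tc : R, [/\ T = tc%:E, tc <= (rho * p 0)^-1,
     p t @[t --> tc^'-] --> +oo,
     N2sq p v t @[t --> tc^'-] --> +oo &
     N0 p v t @[t --> tc^'-] --> +oo].
Proof.
split; first by move=> t t0 tT; exact: part1.
have [tc [hTc htc hbnd]] := T_fin.
have plim : p t @[t --> tc^'-] --> +oo.
  apply/cvgryPgt => B.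
  have [s [s0 sT hs]] := unbounded hmax B.
  have stc : s < tc by move: sT; rewrite hTc lte_fin.
  apply: (@filterS2 _ _ _ _ _ _ _ (nbhs_left_gt stc) (nbhs_left_lt tc)) => x sx xtc.
  apply: (lt_trans hs); apply: p_incr s0 sx _; by rewrite hTc lte_fin.
have good : \forall x \near tc^'-, [/\ 0 < p x, 0 < v x & v x < 1].
  apply: (@filterS2 _ _ _ _ _ _ _ (nbhs_left_gt htc) (nbhs_left_lt tc)) => x x0 xtc.
  have xT : (x%:E < T)%E by rewrite hTc lte_fin.
  split; [exact: p_pos (ltW x0) xT | exact: v_pos (ltW x0) xT |].
  exact: lt_trans (v_lt x0 xT) hv1.
exists tc; split => //.
  apply/cvgryPgt => B.
  have := plim; move/cvgryPgt => /(_ (Num.max 1 (B / (2 * pi)))) hp.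
  apply: (@filterS2 _ _ _ _ _ _ _ hp good) => x hx [px vx0 vx1].
  move: hx; rewrite gt_max => /andP[p1 pB].
  have hpi : 0 < 2 * (pi : R) by rewrite mulr_gt0 // pi_gt0.
  move: pB; rewrite ltr_pdivrMr // => pB.
  have w1 : 1 <= (v x)^-1 + v x.
    have : 1 < (v x)^-1 by rewrite invf_gt1.
    lra.
  rewrite /N2sq.
  have P2 : p x <= p x ^+ 2 by rewrite expr2; nra.
  set P := p x in p1 pB px P2 *; set W := _ + _ in w1 *; set Q := 2 * pi in hpi pB *.
  have h1 : Q * P <= Q * P ^+ 2 by rewrite ler_pM2l.
  have h2 : Q * P ^+ 2 <= Q * P ^+ 2 * W.
    by rewrite ler_peMr // mulr_ge0 ?ltW // exprn_gt0.
  rewrite mulrC in pB; lra.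
apply/cvgryPgt => B.
have := plim; move/cvgryPgt => /(_ B) hp.
apply: (@filterS2 _ _ _ _ _ _ _ hp good) => x hx [px vx0 vx1].
rewrite /N0 gtr0_norm //.
have m1 : 1 <= Num.max (v x)^-1 (v x).
  rewrite le_max; apply/orP; left; apply: ltW; by rewrite invf_gt1.
set P := p x in hx px *; set W := Num.max _ _ in m1 *.
nra.
Qed.

End Main.

Theorem theoremA2 (R : realType) (T : \bar R) (p v : R -> R) (rho : R) :
  is_maximal_solution T p v ->
  0 < v 0 < 1 -> 0 < rho < Rf (v 0) -> (Rf (v 0) - rho)^-1 < p 0 ->
  (forall t : R, 0 < t -> (t%:E < T)%E ->
     [/\ v t < v 0, (Rf (v t) - rho)^-1 < p t &
         p 0 / (1 - rho * p 0 * t) <= p t]) /\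
  exists tc : R, [/\ T = tc%:E, tc <= (rho * p 0)^-1,
     p t @[t --> tc^'-] --> +oo,
     N2sq p v t @[t --> tc^'-] --> +oo &
     N0 p v t @[t --> tc^'-] --> +oo].
Proof.
move=> hmax /andP[hv0 hv1] /andP[hr0 hr1] hp0.
have hsol := hmax.2.1.
have hT := hmax.1.
exact: (@final R T p v rho hsol hv0 hv1 hr0 hr1 hp0 hT hmax).
Qed.
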